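(* Let $k\ge4$. For each $p\in\mathbb N_0(k)$, the Hammerstein equation $\int_0^1K_p(t,u;k)f^k(u)\,du=f(t)$, $t\in[0,1]$, has at least two distinct positive solutions $f\in C[0,1]$.
   Context: For integers $k\ge2$, $n\ge1$ and $x\in\mathbb R$: $P_{n,k}(x)=\left(1+\frac{x^{n-1}}{2}\right)^{k+1}-\left(1-\frac{x^{n-1}}{2}\right)^{k+1}$, and for $n>k$: $Q_{n,k}(x)=(k+1)x^{n-k}$. Fix an integer $k$ and, for each integer $n>k$, an arbitrary $\xi(k;n)\in(0,1)$ with $P_{n,k}(\xi(k;n))=Q_{n,k}(\xi(k;n))$. Let $\alpha=\limsup_{n\to\infty}\xi(k;n)^{n-1}$ and let $(n_p)_{p\in\mathbb N}$ be a strictly increasing sequence of integers $>k$ with $\xi(k;n_p)^{n_p-1}\to\alpha$. For $n>k$ put $$C_n(k)=\frac{\xi(k;n)^{3n-k-2}}{\frac{1}{k+2}\left[\left(1+\frac{\xi(k;n)^{n-1}}{2}\right)^{k+2}-\left(1-\frac{\xi(k;n)^{n-1}}{2}\right)^{k+2}\right]-\xi(k;n)^{n-k}},$$ $\gamma_p(k)=C_{n_p}(k)$, $\mathbb N_0(k)=\{p\in\mathbb N: |\gamma_p(k)|<4\}$, and for $p\in\mathbb N_0(k)$, $K_p(t,u;k)=1+\gamma_p(k)\left(t-\frac12\right)\left(u-\frac12\right)$, $t,u\in[0,1]$ (a strictly positive continuous kernel). *)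

(* Defs.v *)
From Stdlib Require Export Reals Lra Lia.
Open Scope R_scope.

Definition Pnk (n k : nat) (x : R) : R :=
  (1 + x ^ (n - 1) / 2) ^ (k + 1) - (1 - x ^ (n - 1) / 2) ^ (k + 1).

Definition Qnk (n k : nat) (x : R) : R := INR (k + 1) * x ^ (n - k).

Definition Cnk (n k : nat) (xi : R) : R :=
  xi ^ (3 * n - k - 2) /
  (/ INR (k + 2) * ((1 + xi ^ (n - 1) / 2) ^ (k + 2) - (1 - xi ^ (n - 1) / 2) ^ (k + 2))
   - xi ^ (n - k)).

Definition Kgam (gamma t u : R) : R := 1 + gamma * (t - 1/2) * (u - 1/2).

Definition is_limsup (u : nat -> R) (l : R) : Prop :=
  forall eps, eps > 0 ->
    (exists N, forall n, (N <= n)%nat -> u n < l + eps) /\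
    (forall N, exists n, (N <= n)%nat /\ l - eps < u n).

Definition cont_on_01 (f : R -> R) : Prop :=
  forall t, 0 <= t <= 1 -> limit1_in f (fun y => 0 <= y <= 1) (f t) t.

Definition pos_hammerstein_solution (K : R -> R -> R) (k : nat) (f : R -> R) : Prop :=
  cont_on_01 f /\
  (forall t, 0 <= t <= 1 -> 0 < f t) /\
  (forall t, 0 <= t <= 1 ->
     exists pr : Riemann_integrable (fun u => K t u * f u ^ k) 0 1,
       RiemannInt pr = f t).

(* Main.v *)
Require Import Defs.
From Stdlib Require Import Reals.
From Coquelicot Require Import Coquelicot.
From Stdlib Require Import Lra Lia.
Open Scope R_scope.

Lemma ftc_riem (F g : R -> R) (v : R) :
  (forall x, 0 <= x <= 1 -> is_derive F x (g x)) ->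
  (forall x, 0 <= x <= 1 -> continuous g x) ->
  F 1 - F 0 = v ->
  exists pr : Riemann_integrable g 0 1, RiemannInt pr = v.
Proof.
  intros Hd Hc Hv.
  assert (H : is_RInt g 0 1 (F 1 - F 0)).
  { apply (is_RInt_derive F g 0 1).
    - rewrite Rmin_left, Rmax_right by lra. auto.
    - rewrite Rmin_left, Rmax_right by lra. auto. }
  rewrite Hv in H.
  exists (ex_RInt_Reals_0 _ _ _ (ex_intro _ v H)).
  rewrite <- RInt_Reals. apply is_RInt_unique; auto.
Qed.

Lemma ftc_ab (F g : R -> R) a b :
  a <= b ->
  (forall x, a <= x <= b -> is_derive F x (g x)) ->
  (forall x, a <= x <= b -> continuous g x) ->
  is_RInt g a b (F b - F a).
Proof.
  intros Hab Hd Hc.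
  apply (is_RInt_derive F g a b).
  - rewrite Rmin_left, Rmax_right by lra. auto.
  - rewrite Rmin_left, Rmax_right by lra. auto.
Qed.

Lemma pos_E (k : nat) (s : R) : (1 <= k)%nat -> 0 < s < 1 ->
  0 < / INR (k + 2) * ((1 + s / 2) ^ (k + 2) - (1 - s / 2) ^ (k + 2))
      - / INR (k + 1) * ((1 + s / 2) ^ (k + 1) - (1 - s / 2) ^ (k + 1)).
Proof.
  intros hk hs.
  set (G := fun u => (1+s*(u-1/2))^(k+2)/(INR(k+2)*s^2)
                     - (1+s*(u-1/2))^(k+1)/(INR(k+1)*s^2) - (u-1/2)^2/2).
  set (g := fun u => (u-1/2)*((1+s*(u-1/2))^k - 1)).
  assert (Hd : forall x, is_derive G x (g x)).
  { intro x. unfold G, g. auto_derive. exact I.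
    replace (Init.Nat.pred (k+2)) with (S k) by lia.
    replace (Init.Nat.pred (k+1)) with k by lia.
    rewrite !plus_INR. simpl pow. simpl INR.
    replace (x + - (1/2)) with (x - 1/2) by ring.
    set (P := (1 + s*(x - 1/2))^k). field.
    split; [lra|]. pose proof (pos_INR k). lra. }
  assert (Hc : forall x, continuous g x).
  { intro x. unfold g. eapply (@ex_derive_continuous R_AbsRing R_NormedModule).
    auto_derive. auto. }
  assert (H1 : is_RInt g 0 (1/2) (G (1/2) - G 0)).
  { apply ftc_ab; auto; lra. }
  assert (H2 : is_RInt g (1/2) 1 (G 1 - G (1/2))).
  { apply ftc_ab; auto; lra. }
  assert (P1 : 0 <= G (1/2) - G 0).
  { apply (is_RInt_ge_0 g 0 (1/2)); auto; try lra.
    intros x hx. unfold g.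
    assert (0 <= 1 + s*(x-1/2) < 1) by nra.
    pose proof (pow_lt_1_compat _ k H ltac:(lia)). nra. }
  assert (P2 : 0 < G 1 - G (1/2)).
  { rewrite <- (is_RInt_unique _ _ _ _ H2).
    apply RInt_gt_0; auto; try lra.
    intros x hx. unfold g.
    assert (1 < 1 + s*(x-1/2)) by nra.
    pose proof (Rlt_pow_R1 _ k H ltac:(lia)). nra. }
  assert (Eq : / INR (k + 2) * ((1 + s / 2) ^ (k + 2) - (1 - s / 2) ^ (k + 2))
      - / INR (k + 1) * ((1 + s / 2) ^ (k + 1) - (1 - s / 2) ^ (k + 1))
      = s^2 * (G 1 - G 0)).
  { unfold G.
    replace (1 + s*(1-1/2)) with (1+s/2) by field.
    replace (1 + s*(0-1/2)) with (1-s/2) by field.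
    set (A2 := (1+s/2)^(k+2)). set (A1 := (1+s/2)^(k+1)).
    set (B2 := (1-s/2)^(k+2)). set (B1 := (1-s/2)^(k+1)).
    rewrite !plus_INR. simpl INR. field.
    split; [lra|]. pose proof (pos_INR k). lra. }
  rewrite Eq. apply Rmult_lt_0_compat; [nra | lra].
Qed.

Lemma cont01 (f : R -> R) : (forall t, continuous f t) -> cont_on_01 f.
Proof.
  intros Hf t _.
  assert (Hc : continuity_pt f t) by (apply continuity_pt_filterlim; apply Hf).
  intros eps He. destruct (Hc eps He) as [alp [Ha Hal]].
  exists alp. split; auto. intros y [Dy Hy].
  destruct (Req_dec y t) as [->|Hne].
  - simpl. unfold R_dist. rewrite Rminus_eq_0, Rabs_R0. lra.
  - apply Hal. split; auto. split; auto. exact I.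
Qed.

Theorem theorem5p8 (k : nat) (hk : (4 <= k)%nat)
  (xi : nat -> R)
  (hxi : forall n, (k < n)%nat -> (0 < xi n < 1) /\ Pnk n k (xi n) = Qnk n k (xi n))
  (alpha : R) (halpha : is_limsup (fun n => xi n ^ (n - 1)) alpha)
  (np : nat -> nat)
  (hinc : forall p, (np p < np (S p))%nat)
  (hgt : forall p, (k < np p)%nat)
  (hcv : Un_cv (fun p => xi (np p) ^ (np p - 1)) alpha)
  (p : nat) (hp : Rabs (Cnk (np p) k (xi (np p))) < 4) :
  exists f1 f2 : R -> R,
    pos_hammerstein_solution (Kgam (Cnk (np p) k (xi (np p)))) k f1 /\
    pos_hammerstein_solution (Kgam (Cnk (np p) k (xi (np p)))) k f2 /\
    (exists t, 0 <= t <= 1 /\ f1 t <> f2 t).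
Proof.
  set (n := np p). pose proof (hgt p) as hn. fold n in hn.
  destruct (hxi n hn) as [hx hPQ].
  set (x := xi n) in *. set (gam := Cnk n k x).
  set (s := x ^ (n - 1)).
  assert (hs : 0 < s < 1).
  { split. apply pow_lt; lra.
    apply (pow_lt_1_compat x (n-1)); [lra | lia]. }
  set (q := x ^ (n - k)).
  assert (hq : 0 < q) by (apply pow_lt; lra).
  assert (hXq : x ^ k * q = x * s).
  { unfold q, s. rewrite <- pow_add.
    replace (k + (n - k))%nat with (S (n - 1)) by lia. simpl. ring. }
  assert (hP : (1 + s / 2) ^ (k + 1) - (1 - s / 2) ^ (k + 1) = INR (k + 1) * q).
  { exact hPQ. }
  set (E := / INR (k + 2) * ((1 + s / 2) ^ (k + 2) - (1 - s / 2) ^ (k + 2)) - q).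
  assert (hE : 0 < E).
  { pose proof (pos_E k s ltac:(lia) hs) as H. rewrite hP in H.
    replace (/ INR (k + 1) * (INR (k + 1) * q)) with q in H. exact H.
    field. apply not_0_INR. lia. }
  assert (hgam : gam = q * s * s / E).
  { unfold gam, Cnk, E. fold x. fold s. fold q. f_equal.
    unfold q, s. rewrite <- !pow_add. f_equal. lia. }
  fold gam.
  exists (fun _ => 1), (fun u => x * (1 + s * (u - 1/2))).
  split; [|split].
  - split; [|split].
    + apply cont01. intros t. apply continuous_const.
    + intros; lra.
    + intros t ht.
      apply (ftc_riem (fun u => u + gam * (t - 1/2) * (u - 1/2)^2 / 2)).
      * intros u hu. auto_derive. exact I. rewrite pow1. unfold Kgam. field.
      * intros u hu. eapply (@ex_derive_continuous R_AbsRing R_NormedModule).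
        unfold Kgam. auto_derive. auto.
      * field.
  - split; [|split].
    + apply cont01. intros t. eapply (@ex_derive_continuous R_AbsRing R_NormedModule).
      auto_derive. auto.
    + intros t ht. apply Rmult_lt_0_compat; [lra | nra].
    + intros t ht.
      apply (ftc_riem (fun u => x ^ k * ((1+s*(u-1/2))^(k+1)/(INR(k+1)*s)
          + gam * (t - 1/2) * ((1+s*(u-1/2))^(k+2)/(INR(k+2)*s^2)
              - (1+s*(u-1/2))^(k+1)/(INR(k+1)*s^2))))).
      * intros u hu. auto_derive. exact I.
        replace (Init.Nat.pred (k+2)) with (S k) by lia.
        replace (Init.Nat.pred (k+1)) with k by lia.
        unfold Kgam. rewrite Rpow_mult_distr.
        rewrite !plus_INR. simpl pow. simpl INR.
        replace (u + - (1/2)) with (u - 1/2) by ring.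
        set (P := (1 + s*(u - 1/2))^k). set (X := x ^ k). field.
        split; [lra|]. pose proof (pos_INR k). lra.
      * intros u hu. eapply (@ex_derive_continuous R_AbsRing R_NormedModule).
        unfold Kgam. auto_derive. auto.
      * replace (1 + s*(1-1/2)) with (1+s/2) by field.
        replace (1 + s*(0-1/2)) with (1-s/2) by field.
        assert (hP1 : (1 + s / 2) ^ (k + 1) = (1 - s / 2) ^ (k + 1) + INR (k + 1) * q) by lra.
        assert (hD : (1 + s / 2) ^ (k + 2) = (1 - s / 2) ^ (k + 2) + INR (k + 2) * (E + q)).
        { unfold E. field. apply not_0_INR. lia. }
        rewrite hP1, hD, hgam.
        replace (x ^ k) with (x * s / q) by (field_simplify_eq; [lra | lra]).
        set (B1 := (1 - s/2)^(k+1)). set (B2 := (1 - s/2)^(k+2)).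
        rewrite !plus_INR. simpl INR. field.
        repeat split; try lra. pose proof (pos_INR k). lra.
        pose proof (pos_INR k). lra.
  - exists (1/2). split; [lra|]. intro H.
    replace (1/2 - 1/2) with 0 in H by ring. nra.
Qed.
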